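(* Let $\Lambda\subset\mathbb B_d$ be an interpolating sequence. Then $\{w\}\cup\Lambda$ is also an interpolating sequence for every $w\in\mathbb B_d$.
   Context: $\mathbb B_d$ is the open unit ball of $\mathbb C^d$; $\mathcal M_d$ is the multiplier algebra of the Drury–Arveson space $H^2_d$ (the reproducing kernel Hilbert space on $\mathbb B_d$ with kernel $(1-\langle z,w\rangle)^{-1}$). A countable set $\Lambda\subset\mathbb B_d$ is an interpolating sequence if for every bounded function $a$ on $\Lambda$ there is $\psi\in\mathcal M_d$ with $\psi(\lambda)=a(\lambda)$ for all $\lambda\in\Lambda$. *)

(* Defs.v *)
From HB Require Import structures.
From mathcomp Require Import all_boot all_order all_algebra.
From mathcomp Require Import complex.
From mathcomp Require Import boolp classical_sets cardinality reals.
Set Implicit Arguments. Unset Strict Implicit. Unset Printing Implicit Defensive.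
Import Order.TTheory GRing.Theory Num.Theory.
Local Open Scope ring_scope.
Local Open Scope classical_set_scope.

Section DruryArveson.
Variable R : realType.
Notation C := (complex R).

Definition cvec (d : nat) := 'I_d -> C.

Definition cinner (d : nat) (z w : cvec d) : C := \sum_(i < d) z i * (w i)^*.

Definition ball_d (d : nat) : set (cvec d) := [set z | cinner z z < 1].

Definition DAkernel (d : nat) (z w : cvec d) : C := (1 - cinner z w)^-1.

(* Membership in the RKHS H(k) with kernel k = DAkernel (Aronszajn):
   f belongs to H^2_d iff the functional  sum_j a_j k_{x_j} |-> sum_j conj(a_j) f(x_j)
   = < f , sum_j a_j k_{x_j} >  is bounded on the span of the kernel functions, i.e.
   there is M with |sum_j conj(a_j) f(x_j)|^2 <= M * ||sum_j a_j k_{x_j}||^2,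
   where ||sum_j a_j k_{x_j}||^2 = sum_{i,j} conj(a_i) a_j k(x_i, x_j). *)
Definition in_DA (d : nat) (f : cvec d -> C) : Prop :=
  exists M : C, forall (n : nat) (x : 'I_n -> cvec d) (a : 'I_n -> C),
    (forall j, ball_d (x j)) ->
    `|\sum_(j < n) (a j)^* * f (x j)| ^+ 2
      <= M * \sum_(i < n) \sum_(j < n) (a i)^* * a j * DAkernel (x i) (x j).

Definition is_multiplier (d : nat) (phi : cvec d -> C) : Prop :=
  forall f : cvec d -> C, in_DA f -> in_DA (fun z => phi z * f z).

Definition interpolating (d : nat) (L : set (cvec d)) : Prop :=
  [/\ countable L, L `<=` @ball_d d &
    forall a : cvec d -> C, (exists B : R, forall l, L l -> `|a l| <= (B%:C)%C) ->
      exists phi : cvec d -> C, is_multiplier phi /\ forall l, L l -> phi l = a l].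

End DruryArveson.
Arguments ball_d {R} d.

(* Main.v *)
Require Import Defs.
From HB Require Import structures.
From mathcomp Require Import all_boot all_order all_algebra.
From mathcomp Require Import complex.
From mathcomp Require Import boolp classical_sets cardinality reals.
From mathcomp Require Import ring lra.
Set Implicit Arguments. Unset Strict Implicit. Unset Printing Implicit Defensive.
Import Order.TTheory GRing.Theory Num.Theory.
Local Open Scope ring_scope.
Local Open Scope classical_set_scope.

Section Work.
Variable R : realType.
Variable d : nat.
Local Notation C := (complex R).
Local Notation V := (cvec R d).
Implicit Types z w : V.

Lemma cinner_conj z w : (cinner z w)^* = cinner w z.
Proof.
rewrite /cinner rmorph_sum; apply: eq_bigr => i _.
by rewrite rmorphM /= conjCK mulrC.
Qed.

Lemma cinner_ge0 z : 0 <= cinner z z.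
Proof. by apply: sumr_ge0 => i _; exact: mul_conjC_ge0. Qed.

Lemma real_ge0C (x : C) : 0 <= x -> x \is Num.real.
Proof. exact: ger0_real. Qed.

Lemma amgm (x y : C) : 0 <= x -> 0 <= y -> 2 * x * y <= x ^+ 2 + y ^+ 2.
Proof.
move=> hx hy.
have hr : x - y \is Num.real by rewrite rpredB // ger0_real.
rewrite -subr_ge0.
have -> : x ^+ 2 + y ^+ 2 - 2 * x * y = (x - y) ^+ 2 by ring.
exact: real_exprn_even_ge0.
Qed.


Lemma inner_bound z w (e : C) : 0 <= e ->
  2 * e * `|cinner z w| <= e ^+ 2 * cinner z z + cinner w w.
Proof.
move=> he.
have h1 : `|cinner z w| <= \sum_i `|z i| * `|w i|.
  rewrite /cinner; apply: le_trans (ler_norm_sum _ _ _) _.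
  by apply: ler_sum => i _; rewrite normrM norm_conjC.
apply: le_trans (_ : 2 * e * \sum_i `|z i| * `|w i| <= _).
  by rewrite ler_wpM2l // mulr_ge0.
rewrite /cinner mulr_sumr mulr_sumr -big_split /=; apply: ler_sum => i _.
rewrite -!normCK.
have := amgm (mulr_ge0 he (normr_ge0 (z i))) (normr_ge0 (w i)).
by rewrite exprMn !mulrA.
Qed.


Lemma ball_lt1 z : ball_d d z -> cinner z z < 1.
Proof. by []. Qed.

Lemma inner_lt1 z w : ball_d d z -> ball_d d w -> `|cinner z w| < 1.
Proof.
move=> /ball_lt1 hz /ball_lt1 hw.
have := inner_bound z w ler01; rewrite expr1n mul1r mulr1 => h.
have h2 : 2 * `|cinner z w| < 2 * 1.
  apply: le_lt_trans h _; rewrite mulr1 -[2]/(1 + 1).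
  exact: ltrD.
by rewrite ltr_pM2l in h2.
Qed.

Lemma kden_neq0 z w : ball_d d z -> ball_d d w -> 1 - cinner z w != 0.
Proof.
move=> hz hw; rewrite subr_eq0; apply/eqP => h.
by have := inner_lt1 hz hw; rewrite -h normr1 ltxx.
Qed.

Lemma coord_le1 z i : ball_d d z -> `|z i| <= 1.
Proof.
move=> /ball_lt1 hz.
rewrite -(@expr_le1 _ 2) //; apply: le_trans (ltW hz).
rewrite normCK /cinner (bigD1 i) //= lerDl.
by apply: sumr_ge0 => j _; exact: mul_conjC_ge0.
Qed.

Lemma kernel_rec z w : ball_d d z -> ball_d d w ->
  DAkernel z w = 1 + cinner z w * DAkernel z w.
Proof.
move=> hz hw; have h := kden_neq0 hz hw.
rewrite /DAkernel; move: h; set c := cinner z w => h.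
by field.
Qed.

Definition Qf n (x : 'I_n -> V) (a : 'I_n -> C) :=
  \sum_(i < n) \sum_(j < n) (a i)^* * a j * DAkernel (x i) (x j).

Definition scl n (x : 'I_n -> V) (a : 'I_n -> C) (l : 'I_d) :=
  fun j => a j * (x j l)^*.

Lemma Qrec n (x : 'I_n -> V) a : (forall j, ball_d d (x j)) ->
  Qf x a = `|\sum_j a j| ^+ 2 + \sum_l Qf x (scl x a l).
Proof.
move=> hx; rewrite /Qf.
transitivity (\sum_i \sum_j (a i)^* * a j + \sum_i \sum_j
   (a i)^* * a j * (cinner (x i) (x j) * DAkernel (x i) (x j))).
  rewrite -big_split; apply: eq_bigr => i _; rewrite -big_split.
  apply: eq_bigr => j _; rewrite {1}(kernel_rec (hx i) (hx j)) /=; ring.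
congr (_ + _).
  rewrite normCKC rmorph_sum mulr_suml; apply: eq_bigr => i _.
  by rewrite mulr_sumr.
transitivity (\sum_i \sum_j \sum_l (scl x a l i)^* * (scl x a l j) *
   DAkernel (x i) (x j)).
  apply: eq_bigr => i _; apply: eq_bigr => j _.
  rewrite /cinner mulr_suml mulr_sumr; apply: eq_bigr => l _.
  rewrite /scl rmorphM /= conjCK; ring.
under eq_bigr => i _ do rewrite exchange_big.
by rewrite exchange_big.
Qed.


Lemma Q_conj n (x : 'I_n -> V) a : (Qf x a)^* = Qf x a.
Proof.
rewrite /Qf rmorph_sum exchange_big; apply: eq_bigr => j _.
rewrite rmorph_sum; apply: eq_bigr => i _.
rewrite /DAkernel !rmorphM /= fmorphV /= rmorphB /= rmorph1 cinner_conj conjCK.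
ring.
Qed.

Lemma Q_real n (x : 'I_n -> V) a : Qf x a \is Num.real.
Proof. by rewrite CrealE Q_conj. Qed.

Lemma Q_scale n (x : 'I_n -> V) a c :
  Qf x (fun j => c * a j) = c^* * c * Qf x a.
Proof.
rewrite /Qf mulr_sumr; apply: eq_bigr => i _; rewrite mulr_sumr.
apply: eq_bigr => j _; rewrite rmorphM /=; ring.
Qed.

Definition Nf n (a : 'I_n -> C) := \sum_j a j * (a j)^*.

Lemma Nf_ge0 n (a : 'I_n -> C) : 0 <= Nf a.
Proof. by apply: sumr_ge0 => j _; exact: mul_conjC_ge0. Qed.

Lemma Nf_term n (a : 'I_n -> C) i : `|a i| ^+ 2 <= Nf a.
Proof.
rewrite normCK /Nf (bigD1 i) //= lerDl.
by apply: sumr_ge0 => j _; exact: mul_conjC_ge0.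
Qed.

Lemma Nf_eq0 n (a : 'I_n -> C) : Nf a = 0 -> forall j, a j = 0.
Proof.
move=> /eqP; rewrite /Nf psumr_eq0 => [/allP h j|j _]; last exact: mul_conjC_ge0.
by have := h j (mem_index_enum j); rewrite /= mul_conjC_eq0 => /eqP.
Qed.

Lemma Q_norm_bound n (x : 'I_n -> V) a :
  `|Qf x a| <= Nf a * \sum_i \sum_j `|DAkernel (x i) (x j)|.
Proof.
rewrite /Qf; apply: le_trans (ler_norm_sum _ _ _) _; rewrite mulr_sumr.
apply: ler_sum => i _; apply: le_trans (ler_norm_sum _ _ _) _.
rewrite mulr_sumr; apply: ler_sum => j _.
rewrite !normrM norm_conjC ler_wpM2r //.
have h := amgm (normr_ge0 (a i)) (normr_ge0 (a j)).
have h2 : 2 * `|a i| * `|a j| <= 2 * Nf a.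
  apply: le_trans h _; rewrite mulr2n mulrDl mul1r.
  by apply: lerD; exact: Nf_term.
by rewrite -mulrA ler_pM2l in h2.
Qed.


Lemma Nf_scl_sum n (x : 'I_n -> V) a :
  \sum_l Nf (scl x a l) = \sum_j a j * (a j)^* * cinner (x j) (x j).
Proof.
rewrite /Nf exchange_big; apply: eq_bigr => j _.
rewrite /cinner mulr_sumr; apply: eq_bigr => l _.
rewrite /scl rmorphM /= conjCK; ring.
Qed.

Lemma realC_ge0 (x : C) : 0 <= x -> ((complex.Re x)%:C)%C = x.
Proof. by move=> h; rewrite RRe_real // ger0_real. Qed.

Lemma Q_ge0 n (x : 'I_n -> V) a : (forall j, ball_d d (x j)) -> 0 <= Qf x a.
Proof.
move=> hx.
pose t j := complex.Re (cinner (x j) (x j)).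
have ht j : ((t j)%:C)%C = cinner (x j) (x j) by rewrite realC_ge0 // cinner_ge0.
pose rho := \big[Order.max/0]_j t j.
have rho_lt1 : rho < 1.
  apply/bigmax_ltP; split => // j _.
  by rewrite -(@ltcR R) ht rmorph1; exact: ball_lt1.
have rho_ge0 : 0 <= rho by exact: bigmax_ge_id.
have t_le j : t j <= rho by exact: le_bigmax.
pose K := \sum_i \sum_j `|DAkernel (x i) (x j)|.
have K_ge0 : 0 <= K by do 2!(apply: sumr_ge0 => ? _); exact: normr_ge0.
pose E := [set r : R | exists2 b, Nf b != 0 & ((r%:C)%C = Qf x b / Nf b)].
have Qdiv_real b : Nf b != 0 -> Qf x b / Nf b \is Num.real.
  by move=> hb; rewrite rpredM ?rpredV ?Q_real // ger0_real // Nf_ge0.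
have lbE : lbound E (- complex.Re K).
  move=> r [b hb hr]; rewrite -(@lecR R) rmorphN /= realC_ge0 // hr.
  rewrite lerNl; apply: le_trans (real_ler_norm _) _; first by rewrite rpredN Qdiv_real.
  rewrite normrN normrM normfV (ger0_norm (Nf_ge0 b)) ler_pdivrMr ?lt_def ?hb ?Nf_ge0 //.
  by rewrite mulrC; exact: Q_norm_bound.
have hlb : has_lbound E by exists (- complex.Re K).
pose mu := inf E.
have key b : ((mu%:C)%C) * Nf b <= Qf x b.
  have [hb|hb] := eqVneq (Nf b) 0.
    have hb0 := Nf_eq0 hb.
    have -> : Qf x b = 0.
      by rewrite /Qf big1 // => i _; rewrite big1 // => j _; rewrite (hb0 j) mulr0 mul0r.
    by rewrite hb mulr0.
  have Eb : E (complex.Re (Qf x b / Nf b)) by exists b => //; rewrite RRe_real // Qdiv_real.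
  have := ge_inf hlb Eb; rewrite -(@lecR R) RRe_real ?Qdiv_real // => h.
  have hpos : 0 < Nf b by rewrite lt_def hb Nf_ge0.
  by rewrite (ler_pdivlMr _ _ hpos) in h.
have [ha|ha] := eqVneq (Nf a) 0.
  by have := key a; rewrite ha mulr0.
have Ea : E (complex.Re (Qf x a / Nf a)) by exists a => //; rewrite RRe_real // Qdiv_real.
have mu_ge0 : 0 <= mu.
  rewrite leNgt; apply/negP => mu_lt0.
  have lb2 : lbound E (mu * rho).
    move=> r [b hb hr].
    have hpos : 0 < Nf b by rewrite lt_def hb Nf_ge0.
    rewrite -(@lecR R) hr ler_pdivlMr // rmorphM /=.
    rewrite (Qrec b hx).
    apply: le_trans (_ : _ <= \sum_l Qf x (scl x b l)) _; last first.
      by rewrite lerDr exprn_ge0 // normr_ge0.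
    apply: le_trans (_ : _ <= \sum_l (mu%:C)%C * Nf (scl x b l)) _; last first.
      by apply: ler_sum => l _; exact: key.
    rewrite -mulr_sumr Nf_scl_sum -mulrA.
    apply: ler_wnM2l.
      by rewrite -oppr_ge0 -rmorphN /= ler0c oppr_ge0 ltW.
    rewrite /Nf mulr_sumr; apply: ler_sum => j _.
    by rewrite mulrC ler_wpM2r ?mul_conjC_ge0 // -ht lecR.
  have := lb_le_inf (ex_intro _ _ Ea) lb2; rewrite -/mu => h.
  have : mu * (1 - rho) < 0 by rewrite pmulr_llt0 // subr_gt0.
  rewrite mulrBr mulr1 subr_lt0 ltNge h //.
apply: le_trans (key a); rewrite mulr_ge0 // ?Nf_ge0 //.
by rewrite ler0c.
Qed.


Lemma Q_ge_sum n (x : 'I_n -> V) a : (forall j, ball_d d (x j)) ->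
  `|\sum_j a j| ^+ 2 <= Qf x a.
Proof.
move=> hx; rewrite (Qrec a hx) lerDl.
by apply: sumr_ge0 => l _; exact: Q_ge0.
Qed.

Lemma Q_scl_le n (x : 'I_n -> V) a l : (forall j, ball_d d (x j)) ->
  Qf x (scl x a l) <= Qf x a.
Proof.
move=> hx; rewrite (Qrec a hx) (bigD1 l) //= addrCA lerDl.
apply: addr_ge0; first by rewrite exprn_ge0 // normr_ge0.
by apply: sumr_ge0 => l' _; exact: Q_ge0.
Qed.

Definition DAb (f : V -> C) (M : C) := forall (n : nat) (x : 'I_n -> V) (a : 'I_n -> C),
    (forall j, ball_d d (x j)) ->
    `|\sum_(j < n) (a j)^* * f (x j)| ^+ 2 <= M * Qf x a.

Lemma in_DAP f : in_DA f <-> exists2 M : C, 0 <= M & DAb f M.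
Proof.
split => [[M hM]|[M _ hM]]; last by exists M.
exists `|M|; first exact: normr_ge0.
move=> n x a hx; have h := hM n x a hx.
have h0 : 0 <= M * Qf x a by apply: le_trans h; rewrite exprn_ge0 // normr_ge0.
by rewrite -(ger0_norm (Q_ge0 a hx)) -normrM ger0_norm.
Qed.

Lemma sq_add_le (X Y : C) : `|X + Y| ^+ 2 <= 2 * `|X| ^+ 2 + 2 * `|Y| ^+ 2.
Proof.
apply: le_trans (_ : (`|X| + `|Y|) ^+ 2 <= _).
  rewrite ler_pXn2r // ?nnegrE ?normr_ge0 ?addr_ge0 ?normr_ge0 //.
  exact: ler_normD.
have := amgm (normr_ge0 X) (normr_ge0 Y).
rewrite sqrrD -subr_ge0 => h; rewrite -subr_ge0.
have -> : 2 * `|X| ^+ 2 + 2 * `|Y| ^+ 2 - (`|X| ^+ 2 + `|X| * `|Y| *+ 2 + `|Y| ^+ 2)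
  = `|X| ^+ 2 + `|Y| ^+ 2 - 2 * `|X| * `|Y| by rewrite mulr2n; ring.
done.
Qed.

Lemma DA_one : in_DA (fun _ : V => 1).
Proof.
exists 1 => n x a hx; rewrite mul1r.
rewrite (eq_bigr (fun j => (a j)^*)); last by move=> j _; rewrite mulr1.
by rewrite -rmorph_sum /= norm_conjC; exact: Q_ge_sum.
Qed.

Lemma DA_add f g : in_DA f -> in_DA g -> in_DA (fun z => f z + g z).
Proof.
move=> /in_DAP [M1 hM1 h1] /in_DAP [M2 hM2 h2].
exists (2 * M1 + 2 * M2) => n x a hx.
rewrite (eq_bigr (fun j => (a j)^* * f (x j) + (a j)^* * g (x j))); last first.
  by move=> j _; rewrite mulrDr.
rewrite big_split /=; apply: le_trans (sq_add_le _ _) _.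
rewrite [X in _ <= X]mulrDl; apply: lerD; rewrite -mulrA ler_wpM2l //; [exact: h1 | exact: h2].
Qed.

Lemma DA_scale c f : in_DA f -> in_DA (fun z => c * f z).
Proof.
move=> /in_DAP [M hM h]; exists (`|c| ^+ 2 * M) => n x a hx.
rewrite (eq_bigr (fun j => c * ((a j)^* * f (x j)))); last first.
  by move=> j _; rewrite mulrCA.
rewrite -mulr_sumr normrM exprMn -(mulrA _ M) ler_wpM2l ?exprn_ge0 ?normr_ge0 //.
exact: h.
Qed.

Lemma mult_const c : is_multiplier (fun _ : V => c).
Proof. by move=> f hf; exact: DA_scale. Qed.

Lemma mult_add p q : is_multiplier p -> is_multiplier q ->
  is_multiplier (fun z => p z + q z).
Proof.
move=> hp hq f hf.
have -> : (fun z => (p z + q z) * f z) = (fun z => p z * f z + q z * f z).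
  by apply: funext => z; rewrite mulrDl.
by apply: DA_add; [exact: hp | exact: hq].
Qed.

Lemma mult_mul p q : is_multiplier p -> is_multiplier q ->
  is_multiplier (fun z => p z * q z).
Proof.
move=> hp hq f hf.
have -> : (fun z => (p z * q z) * f z) = (fun z => p z * (q z * f z)).
  by apply: funext => z; rewrite mulrA.
by apply: hp; exact: hq.
Qed.

Lemma mult_sum (I : eqType) (r : seq I) (F : I -> V -> C) :
  (forall i, is_multiplier (F i)) -> is_multiplier (fun z => \sum_(i <- r) F i z).
Proof.
move=> hF; elim: r => [|i r IH].
  have -> : (fun z => \sum_(i <- [::]) F i z) = (fun _ => 0).
    by apply: funext => z; rewrite big_nil.
  exact: mult_const.
have -> : (fun z => \sum_(j <- i :: r) F j z) = (fun z => F i z + \sum_(j <- r) F j z).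
  by apply: funext => z; rewrite big_cons.
exact: mult_add.
Qed.

Lemma mult_coord l : is_multiplier (fun z : V => z l).
Proof.
move=> f /in_DAP [M hM h]; exists M => n x a hx.
rewrite (eq_bigr (fun j => (scl x a l j)^* * f (x j))); last first.
    by move=> j _; rewrite /scl rmorphM /= conjCK mulrA.
have h1 := h n x (scl x a l) hx; apply: le_trans h1 _.
by rewrite ler_wpM2l // Q_scl_le.
Qed.


Definition vsub z w : V := fun i => z i - w i.

Lemma cinnerBr z (x y : V) : cinner z (vsub x y) = cinner z x - cinner z y.
Proof.
rewrite /cinner -sumrB; apply: eq_bigr => i _.
by rewrite /vsub rmorphB /= mulrBr.
Qed.

Lemma cinnerBl (x y : V) z : cinner (vsub x y) z = cinner x z - cinner y z.
Proof.
rewrite /cinner -sumrB; apply: eq_bigr => i _.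
by rewrite /vsub mulrBl.
Qed.

Lemma small_inner (v u : V) (e : C) : 0 < e -> cinner v v <= 1 -> cinner u u <= e ^+ 2 ->
  `|cinner v u| <= e.
Proof.
move=> he hv hu.
have h := inner_bound v u (ltW he).
have h2 : (2 * e) * `|cinner v u| <= (2 * e) * e.
  apply: le_trans h _.
  have -> : 2 * e * e = e ^+ 2 + e ^+ 2 by ring.
  apply: lerD => //.
  by rewrite -[X in _ <= X]mulr1 ler_wpM2l // exprn_ge0 // ltW.
by rewrite ler_pM2l ?mulr_gt0 // in h2.
Qed.

Definition Dk z w := DAkernel z z - DAkernel z w - DAkernel w z + DAkernel w w.

Lemma DA_cont f M z w : DAb f M -> ball_d d z -> ball_d d w ->
  `|f z - f w| ^+ 2 <= M * Dk z w.
Proof.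
move=> h hz hw.
pose x := fun i : 'I_2 => if i == ord0 then z else w.
pose a := fun i : 'I_2 => if i == ord0 then 1 else -1 : C.
have hx : forall j, ball_d d (x j) by move=> j; rewrite /x; case: ifP.
have := h 2 x a hx.
rewrite /Qf !big_ord_recl !big_ord0 /= /x /a /=.
rewrite !rmorphN /= !conjC1 !addr0 /Dk.
have -> : 1 * f z + - 1 * f w = f z - f w by ring.
move=> h1; apply: le_trans h1 _.
by rewrite le_eqVlt; apply/orP; left; apply/eqP; ring.
Qed.


Lemma frac_bound (x p q e h : C) : 0 < h -> h <= `|p| -> h <= `|q| -> `|x| <= e ->
  `|x / (p * q)| <= e / (h * h).
Proof.
move=> hh hp hq hx.
have hp0 : 0 < `|p| by apply: lt_le_trans hp.
have hq0 : 0 < `|q| by apply: lt_le_trans hq.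
rewrite normrM normfV normrM; apply: ler_pM => //.
- by rewrite invr_ge0 mulr_ge0 // normr_ge0.
- by rewrite lef_pV2 ?posrE ?mulr_gt0 // ler_pM // ltW.
Qed.

Lemma Dbound z w (e : C) : ball_d d z -> ball_d d w -> 0 < e ->
  4 * e <= 1 - cinner w w -> cinner (vsub z w) (vsub z w) <= e ^+ 2 ->
  `|Dk z w| <= 8 * e / (1 - cinner w w) ^+ 2.
Proof.
move=> hz hw he h4 hu.
have hzz : cinner z z <= 1 by apply: ltW; exact: ball_lt1.
have hww : cinner w w <= 1 by apply: ltW; exact: ball_lt1.
set c := 1 - cinner w w in h4 *.
set u := vsub z w in hu *.
have hc : 0 < c by rewrite subr_gt0; exact: ball_lt1.
have hzu : `|cinner z u| <= e by exact: small_inner.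
have hwu : `|cinner w u| <= e by exact: small_inner.
have huw : `|cinner u w| <= e by rewrite -cinner_conj norm_conjC.
have eA : 1 - cinner z z = c - (cinner z u + cinner u w).
  by rewrite /c /u cinnerBr cinnerBl; ring.
have eB : 1 - cinner z w = c - cinner u w.
  by rewrite /c /u cinnerBl; ring.
have eB' : 1 - cinner w z = c - cinner w u.
  by rewrite /c /u cinnerBr; ring.
have hA0 := kden_neq0 hz hz.
have hB0 := kden_neq0 hz hw.
have hB'0 := kden_neq0 hw hz.
have hc0 : c != 0 by rewrite gt_eqF.
have lowb (X : C) : `|X| <= 2 * e -> c / 2 <= `|c - X|.
  move=> hX; apply: le_trans (lerB_normD c (- X)); rewrite normrN (gtr0_norm hc).
  apply: le_trans (_ : c - 2 * e <= c - `|X|); last by rewrite lerD2l lerN2.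
  rewrite -subr_ge0.
  have -> : c - 2 * e - c / 2 = (c - 4 * e) / 2 by field.
  by rewrite divr_ge0 // subr_ge0.
have hAl : c / 2 <= `|1 - cinner z z|.
  rewrite eA; apply: lowb; apply: le_trans (ler_normD _ _) _.
  by rewrite mulr2n mulrDl mul1r lerD.
have he2 : e <= 2 * e by rewrite mulr2n mulrDl mul1r lerDl ltW.
have hBl : c / 2 <= `|1 - cinner z w| by rewrite eB; apply: lowb; exact: le_trans he2.
have hB'l : c / 2 <= `|1 - cinner w z| by rewrite eB'; apply: lowb; exact: le_trans he2.
have hcl : c / 2 <= `|c|.
  by rewrite gtr0_norm // ler_pdivrMr // ler_peMr // ltW // ltr1n.
have eD : Dk z w = cinner z u / ((1 - cinner z z) * (1 - cinner z w))
   - cinner w u / (c * (1 - cinner w z)).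
  rewrite /Dk /DAkernel /u !cinnerBr /c.
  move: hA0 hB0 hB'0 hc0; rewrite /c => hA0 hB0 hB'0 hc0.
  by field; rewrite hA0 hB0 hB'0 hc0.
have hh : 0 < c / 2 by rewrite divr_gt0.
rewrite eD; apply: le_trans (ler_normB _ _) _.
apply: le_trans (lerD (frac_bound hh hAl hBl hzu) (frac_bound hh hcl hB'l hwu)) _.
rewrite le_eqVlt; apply/orP; left; apply/eqP; field.
by rewrite hc0.
Qed.


Lemma archC (y : C) : 0 < y -> exists K : nat, (K.+1%:R)^-1 <= y.
Proof.
move=> hy.
have ey : ((complex.Re y)%:C)%C = y by rewrite realC_ge0 // ltW.
have hr : 0 < complex.Re y by rewrite -(@ltcR R) ey.
exists (Num.Def.archi_bound (complex.Re y)^-1).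
rewrite -ey -(rmorph_nat (real_complex R)) -fmorphV /= lecR.
rewrite invf_ple ?posrE // ?ltr0Sn //.
apply: ltW; apply: lt_le_trans (archi_boundP _) _; first by rewrite invr_ge0 ltW.
by rewrite ler_nat.
Qed.

Lemma invS_le (m n : nat) : (m <= n)%N -> (n.+1%:R)^-1 <= (m.+1%:R)^-1 :> C.
Proof.
by move=> h; rewrite lef_pV2 ?posrE ?ltr0Sn // ler_nat.
Qed.

Lemma invS_gt0 (n : nat) : 0 < (n.+1%:R)^-1 :> C.
Proof. by rewrite invr_gt0 ltr0Sn. Qed.


Fixpoint seqs (P : R -> V) (g : V -> R) (n : nat) : V :=
  match n with
  | 0 => P 1
  | m.+1 => P (Num.min (g (seqs P g m)) (m.+2%:R)^-1)
  end.

Lemma liftinv n : ((((n.+1%:R)^-1 : R)%:C)%C = (n.+1%:R)^-1 :> C).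
Proof. by rewrite fmorphV /= rmorph_nat. Qed.

Lemma no_accum (L : set V) w : interpolating L -> ball_d d w -> ~ L w ->
  exists e : C, 0 < e /\ forall l, L l -> e <= cinner (vsub l w) (vsub l w).
Proof.
move=> [_ sL iL] hw hwL.
case: (pselect (exists e : C, 0 < e /\ forall l, L l -> e <= cinner (vsub l w) (vsub l w)))
  => // hn; exfalso.
pose gR l := complex.Re (cinner (vsub l w) (vsub l w)).
have eg l : ((gR l)%:C)%C = cinner (vsub l w) (vsub l w) by rewrite realC_ge0 // cinner_ge0.
have hB (eta : R) : 0 < eta -> exists l, L l /\ gR l < eta.
  move=> heta; case: (pselect (exists l, L l /\ gR l < eta)) => // hno; exfalso.
  apply: hn; exists (eta%:C)%C; split; first by rewrite ltcR.
  move=> l hl; rewrite -eg lecR leNgt; apply/negP => hlt.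
  by apply: hno; exists l.
have gpos l : L l -> 0 < gR l.
  move=> hl; rewrite lt_def; apply/andP; split; last first.
    by rewrite -(@lecR R) eg rmorph0 cinner_ge0.
  apply/negP => /eqP h0; apply: hwL.
  have hz : Nf (vsub l w) = 0 by rewrite /Nf -[LHS]/(cinner (vsub l w) (vsub l w)) -eg h0 rmorph0.
  have -> : w = l; last by [].
  by apply: funext => i; have := Nf_eq0 hz i; rewrite /vsub => /eqP; rewrite subr_eq0 => /eqP.
have hex : forall eta : R, exists l : V, 0 < eta -> L l /\ gR l < eta.
  move=> eta; case: (pselect (0 < eta)) => h.
    by have [l hl] := hB eta h; exists l.
  by exists w.
have [P hP] := choice hex.
pose s := seqs P gR.
have hs : forall n, L (s n) /\ gR (s n) < (n.+1%:R)^-1.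
  elim => [|m [hL hg]] /=; first by rewrite invr1; apply: hP; exact: ltr01.
  have hpos : 0 < Num.min (gR (s m)) (m.+2%:R)^-1.
    by rewrite lt_min gpos // invr_gt0 ltr0Sn.
  have [hL' hg'] := hP _ hpos; split => //.
  by move: hg'; rewrite lt_min => /andP[].
have hdec : forall m, gR (s m.+1) < gR (s m).
  move=> m; have hpos : 0 < Num.min (gR (s m)) (m.+2%:R)^-1.
    by rewrite lt_min gpos /= ?invr_gt0 ?ltr0Sn //; exact: (hs m).1.
  have [_ hg'] := hP _ hpos.
  by move: hg'; rewrite lt_min => /andP[].
have hmono : forall m n, (m < n)%N -> gR (s n) < gR (s m).
  move=> m; elim => [//|n IH]; rewrite ltnS leq_eqVlt => /orP[/eqP <-|hmn].
    exact: hdec.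
  exact: lt_trans (hdec n) (IH hmn).
pose S := fun l => exists n, l = s (2 * n)%N.
pose a0 := fun l => if pselect (S l) then 1 else 0 : C.
have [phi [mphi ephi]] : exists phi : V -> C, is_multiplier phi /\ forall l, L l -> phi l = a0 l.
  apply: iL; exists 1 => l _; rewrite /a0; case: (pselect (S l)) => ?.
    by rewrite normr1 rmorph1.
  by rewrite normr0 rmorph1 ler01.
have hS n : phi (s (2 * n)%N) = 1.
  rewrite ephi; last exact: (hs _).1.
  rewrite /a0; case: (pselect (S _)) => // hno; exfalso; apply: hno.
  by exists n.
have hnS n : phi (s (2 * n).+1) = 0.
  rewrite ephi; last exact: (hs _).1.
  rewrite /a0; case: (pselect (S _)) => // -[m hm]; exfalso.
  have : gR (s (2 * n).+1) = gR (s (2 * m)%N) by rewrite -hm.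
  case: (ltngtP (2 * m) (2 * n).+1) => [h|h|h].
  - by move=> e; have := hmono _ _ h; rewrite e ltxx.
  - by move=> e; have := hmono _ _ h; rewrite e ltxx.
  - by move: h => /(congr1 odd); rewrite /= !oddM.
have := mphi _ DA_one => /in_DAP [M hM hDA].
set c := 1 - cinner w w.
have hc : 0 < c by rewrite subr_gt0; exact: ball_lt1.
have [K1 hK1] := archC (divr_gt0 hc (ltr0Sn _ 3)).
have hM1 : 0 < 32 * M + 1 by rewrite ltr_wpDl // mulr_ge0 // ler0n.
have [K2 hK2] := archC (divr_gt0 (exprn_gt0 2 hc) hM1).
pose K := (K1 + K2)%N.
pose e : C := (K.+1%:R)^-1.
have he : 0 < e by exact: invS_gt0.
have he4 : 4 * e <= c.
  have : e <= c / 4 by apply: le_trans hK1; apply: invS_le; exact: leq_addr.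
  by rewrite ler_pdivlMr ?ltr0Sn // mulrC.
have heM : e * (32 * M + 1) <= c ^+ 2.
  have : e <= c ^+ 2 / (32 * M + 1) by apply: le_trans hK2; apply: invS_le; exact: leq_addl.
  by rewrite ler_pdivlMr.
pose n := (K.+1 ^ 2)%N.
have small j : (n <= j)%N -> cinner (vsub (s j) w) (vsub (s j) w) <= e ^+ 2.
  move=> hj; rewrite -eg; apply: ltW; apply: lt_le_trans (_ : _ < ((j.+1%:R)^-1 : R)%:C%C) _.
    by rewrite ltcR (hs j).2.
  rewrite liftinv /e exprVn -natrX lef_pV2 ?posrE ?ltr0n ?expn_gt0 // ler_nat.
  by apply: leq_trans hj _.
have bnd j : (n <= j)%N -> `|phi (s j) * 1 - phi w * 1| ^+ 2 <= M * (8 * e / c ^+ 2).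
  move=> hj; have h1 := DA_cont hDA (sL _ (hs j).1) hw.
  have h0 : 0 <= M * Dk (s j) w by apply: le_trans h1; rewrite exprn_ge0 // normr_ge0.
  apply: le_trans h1 _; rewrite -(ger0_norm h0) normrM (ger0_norm hM).
  rewrite ler_wpM2l //; apply: Dbound => //; [exact: sL (hs j).1 | exact: small].
have b1 := bnd (2 * n)%N (leq_pmull _ (ltn0Sn 1)).
have b2 := bnd (2 * n).+1 (leq_trans (leq_pmull _ (ltn0Sn 1)) (leqnSn _)).
rewrite hS in b1; rewrite hnS in b2.
have h1 : 1 <= 2 * (M * (8 * e / c ^+ 2)) + 2 * (M * (8 * e / c ^+ 2)).
  have := sq_add_le (1 * 1 - phi w * 1) (phi w * 1 - 0 * 1).
  have -> : 1 * 1 - phi w * 1 + (phi w * 1 - 0 * 1) = 1 by ring.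
  rewrite normr1 expr1n => h; apply: le_trans h _.
  by apply: lerD; rewrite ler_pM2l // -normrN opprB.
have hc2 : 0 < c ^+ 2 by exact: exprn_gt0.
have : 1 <= 32 * M * e / c ^+ 2.
  apply: le_trans h1 _; rewrite le_eqVlt; apply/orP; left; apply/eqP.
  field; by rewrite gt_eqF.
rewrite ler_pdivlMr // mul1r => hle.
have : c ^+ 2 < c ^+ 2.
  apply: le_lt_trans hle _; apply: lt_le_trans heM.
  have -> : e * (32 * M + 1) = 32 * M * e + e by ring.
  by rewrite ltrDl.
by rewrite ltxx.
Qed.


Lemma mult_opp p : is_multiplier p -> is_multiplier (fun z => - p z).
Proof.
move=> hp.
have -> : (fun z => - p z) = (fun z => (fun _ => -1) z * p z).
  by apply: funext => z; rewrite mulN1r.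
by apply: mult_mul => //; exact: mult_const.
Qed.

Lemma separate (L : set V) w : interpolating L -> ball_d d w -> ~ L w ->
  exists psi : V -> C, is_multiplier psi /\ (forall l, L l -> psi l = 0) /\ psi w = 1.
Proof.
move=> hL hw hwL; have [e [he hg]] := no_accum hL hw hwL.
case: hL => _ sL iL.
have gpos l : L l -> 0 < cinner (vsub l w) (vsub l w) by move=> hl; exact: lt_le_trans he (hg l hl).
have [th [mth eth]] : exists th : V -> C, is_multiplier th /\
    forall l, L l -> th l = (cinner (vsub l w) (vsub l w))^-1.
  apply: iL; exists (complex.Re e)^-1 => l hl.
  rewrite normfV (ger0_norm (ltW (gpos l hl))) fmorphV /= realC_ge0 ?(ltW he) //.
  by rewrite lef_pV2 ?posrE ?gpos // hg.
have hz : forall i, exists zeta : V -> C, is_multiplier zeta /\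
    forall l, L l -> zeta l = (l i - w i)^*.
  move=> i; apply: iL; exists 2 => l hl.
  rewrite norm_conjC (rmorph_nat (real_complex R) 2); apply: le_trans (ler_normB _ _) _.
  rewrite -[2%:R]/(1 + 1 : C); apply: lerD; apply: coord_le1 => //; exact: sL.
have [zeta hzeta] := choice hz.
exists (fun z => 1 - th z * \sum_i (z i - w i) * zeta i z); split; [|split].
- apply: mult_add; first exact: mult_const.
  apply: mult_opp; apply: mult_mul => //; apply: mult_sum => i.
  apply: mult_mul; last exact: (hzeta i).1.
  by apply: mult_add; [exact: mult_coord | exact: mult_const].
- move=> l hl; rewrite eth //.
  have -> : \sum_i (l i - w i) * zeta i l = cinner (vsub l w) (vsub l w).
    by apply: eq_bigr => i _; rewrite (hzeta i).2.
  by rewrite mulVf ?subrr // gt_eqF // gpos.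
- by rewrite big1 ?mulr0 ?subr0 // => i _; rewrite subrr mul0r.
Qed.

End Work.

Unset Implicit Arguments.

Theorem corollary2p4 (R : realType) (d : nat) (L : set (cvec R d)) :
  interpolating L -> forall w : cvec R d, ball_d d w -> interpolating ([set w] `|` L).
Proof.
move=> hL w hw; have hL' := hL; case: hL => cL sL iL; split.
- rewrite -bigcup2E; apply: bigcup_countable; first exact: countableP.
  by move=> [|[|i]] _ //=.
- by move=> l [->|/sL].
- move=> a [B hB].
  have [phi1 [m1 e1]] := iL a (ex_intro _ B (fun l hl => hB l (or_intror hl))).
  case: (pselect (L w)) => hwL.
    by exists phi1; split => // l [->|hl]; exact: e1.
  have [psi [mpsi [psi0 psiw]]] := separate hL' hw hwL.
  exists (fun z => phi1 z + (a w - phi1 w) * psi z); split.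
    apply: mult_add => //; apply: mult_mul => //; exact: mult_const.
  move=> l [->|hl].
    by rewrite psiw mulr1 addrC subrK.
  by rewrite psi0 // mulr0 addr0 e1.
Qed.
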